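(* The Shapley–Shubik index satisfies the strong minimum-power blocker postulate. For every SVG $\mathcal{G}=(N,\mathcal{W})$: (1) if $S\in\mathcal{W}$ and $b\in S$ is a YES-blocker, then $SS_b\ge 1/|S|$; (2) if $T\notin\mathcal{W}$ and $b\in N\setminus T$ is a NO-blocker, then $SS_b\ge 1/|N\setminus T|$. (Here $1$ is the Shapley–Shubik index of a dictator in a dictator-rule game.)
   Context: A simple voting game (SVG) is a pair $\mathcal{G}=(N,\mathcal{W})$ with $N$ a nonempty finite set of $n$ players and $\mathcal{W}\subseteq 2^N$ monotone, $\emptyset\notin\mathcal{W}$, $N\in\mathcal{W}$. Player $k$ is YES-decisive in $S$ if $k\in S\in\mathcal{W}$ and $S\setminus\{k\}\notin\mathcal{W}$. The Shapley–Shubik index is $$SS_k=\sum_{S:\ k\text{ YES-decisive in }S}\frac{(|S|-1)!\,(n-|S|)!}{n!}.$$ Blockers: $b$ is a YES-blocker if $b\in S$ for all $S\in\mathcal{W}$, and a NO-blocker if $b\notin S$ for all $S\notin\mathcal{W}$. *)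

(* Defs.v *)
From mathcomp Require Import all_boot all_order all_algebra.
Set Implicit Arguments. Unset Strict Implicit. Unset Printing Implicit Defensive.
Import Order.TTheory GRing.Theory Num.Theory.
Local Open Scope ring_scope.

(* A simple voting game on the finite player set N = [set: T]
   (n = #|T|), given by its set of winning coalitions W. *)
Definition is_SVG (T : finType) (W : pred {set T}) : Prop :=
  (forall S U : {set T}, S \subset U -> W S -> W U) /\
  ~~ W set0 /\ W [set: T].

Definition yes_decisive (T : finType) (W : pred {set T}) (k : T) (S : {set T}) : bool :=
  [&& k \in S, W S & ~~ W (S :\ k)].

Definition SS (T : finType) (W : pred {set T}) (k : T) : rat :=
  \sum_(S : {set T} | yes_decisive W k S)
     (((#|S|.-1)`! * (#|T| - #|S|)`!)%:R / (#|T|`!)%:R).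

Definition yes_blocker (T : finType) (W : pred {set T}) (b : T) : Prop :=
  forall S : {set T}, W S -> b \in S.

Definition no_blocker (T : finType) (W : pred {set T}) (b : T) : Prop :=
  forall S : {set T}, ~~ W S -> b \notin S.

(* Main.v *)
Require Import Defs.
From mathcomp Require Import all_boot all_order all_algebra.
From mathcomp Require Import zify ring lra.
Import Order.TTheory GRing.Theory Num.Theory.
Local Open Scope ring_scope.

Lemma hockey k m : (\sum_(j < m.+1) 'C(k + j, j) = 'C(k + m.+1, m))%N.
Proof.
elim: m => [|m IH]; first by rewrite big_ord1 addn0 !bin0.
by rewrite big_ord_recr /= IH [in RHS]addnS binS addnC.
Qed.

Lemma ident m s : (0 < s)%N ->
  (s * \sum_(j < m.+1) 'C(m, j) * ((s + j).-1)`! * (m - j)`! = (s + m)`!)%N.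
Proof.
case: s => // s _.
have E : forall j : 'I_m.+1, ('C(m, j) * ((s.+1 + j).-1)`! * (m - j)`!
          = 'C(s + j, j) * s`! * m`!)%N.
  move=> [j /= ltj].
  have hj : (j <= m)%N by [].
  have Bm := bin_fact hj.
  have Bs := @bin_fact (s + j) j (leq_addl _ _).
  rewrite addnK in Bs.
  apply/eqP; rewrite -(eqn_pmul2r (fact_gt0 j)); apply/eqP.
  rewrite -Bm -Bs; ring.
rewrite (eq_bigr _ (fun j _ => E j)) -big_distrl -big_distrl /= hockey.
have B := @bin_fact (s + m.+1) m ltac:(lia).
have e : (s + m.+1 - m = s.+1)%N by lia.
rewrite e in B. rewrite addSnnS -B.
rewrite factS; ring.
Qed.

Lemma sum_subsets (T : finType) (D : {set T}) (G : nat -> rat) :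
  \sum_(Y : {set T} | Y \subset D) G #|Y| =
  \sum_(j < #|D|.+1) ('C(#|D|, j))%:R * G j.
Proof.
rewrite (partition_big (fun Y : {set T} => (inord #|Y| : 'I_#|D|.+1)) xpredT) //.
apply: eq_bigr => j _.
rewrite (eq_bigl (fun Y => Y \in [set Y : {set T} | Y \subset D & #|Y| == j])); last first.
  move=> Y; rewrite inE; case sYD: (Y \subset D) => //=.
  have le : (#|Y| <= #|D|)%N by apply: subset_leq_card.
  apply/eqP/eqP => [<-|h]; first by rewrite inordK.
  by apply: val_inj; rewrite /= inordK h.
rewrite (eq_bigr (fun _ => G j)); last by move=> Y; rewrite inE => /andP[_ /eqP->].
by rewrite sumr_const cards_draws mulr_natl.
Qed.

Lemma shift (T : finType) (A D : {set T}) (G : nat -> rat) :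
  (forall x, x \in A -> x \notin D) ->
  \sum_(X : {set T} | (A \subset X) && (X \subset A :|: D)) G #|X| =
  \sum_(Y : {set T} | Y \subset D) G (#|A| + #|Y|).
Proof.
move=> hAD.
rewrite (reindex_onto (fun Y => A :|: Y) (fun X => X :\: A)); last first.
  move=> X /andP[sAX _]; apply/setP => x; rewrite !inE.
  by case xA: (x \in A) => //=; rewrite (subsetP sAX).
apply: eq_big => Y.
  apply/idP/idP.
  - move=> /andP[/andP[_ sY] /eqP eY]; rewrite -eY; apply/subsetP => x.
    rewrite !inE => /andP[xA xAY]; move: (subsetP sY x).
    by rewrite !inE xAY (negbTE xA) /= => /(_ isT).
  - move=> sYD; rewrite subsetUl /= setUSS // andTb.
    apply/eqP/setP => x; rewrite !inE.
    case xY: (x \in Y); last by rewrite orbF andNb.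
    by rewrite orbT andbT; apply/negP => /hAD; rewrite (subsetP sYD).
move=> /andP[_ /eqP eY]; rewrite cardsU.
suff -> : A :&: Y = set0 by rewrite cards0 subn0.
apply/setP => x; rewrite -eY !inE; apply/negP => /andP[xA /andP[nxA _]].
by rewrite xA in nxA.
Qed.

Definition w (n k : nat) : rat := (((k.-1)`! * (n - k)`!)%:R / (n`!)%:R).

Lemma SS_ge (T : finType) (W : pred {set T}) b (P : pred {set T}) :
  (forall X, P X -> yes_decisive W b X) ->
  \sum_(X | P X) w #|T| #|X| <= SS W b.
Proof.
move=> hP; rewrite /SS big_mkcond [X in _ <= X]big_mkcond /=.
apply: ler_sum => X _; case PX: (P X); first by rewrite hP.
by case: ifP => // _; rewrite divr_ge0 ?ler0n.
Qed.

Lemma sumw (n s m : nat) : n = (s + m)%N -> (0 < s)%N ->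
  \sum_(j < m.+1) ('C(m, j))%:R * w n (s + j) = 1 / s%:R.
Proof.
move=> hn hs.
have E : forall j : 'I_m.+1, ('C(m, j))%:R * w n (s + j) =
   ('C(m, j) * ((s + j).-1)`! * (m - j)`!)%:R / (n`!)%:R.
  move=> [j /= lj]; rewrite /w mulrA -natrM mulnA.
  by have -> : (n - (s + j) = m - j)%N by lia.
rewrite (eq_bigr _ (fun j _ => E j)) -mulr_suml -natr_sum.
have I := @ident m s hs; rewrite -hn in I.
rewrite -I natrM.
set N := (\sum_(_ < _) _)%N in I *.
have NP : (N%:R : rat) != 0.
  rewrite pnatr_eq0; apply/negP => /eqP N0.
  by move: (fact_gt0 n); rewrite -I N0 muln0.
have SP : (s%:R : rat) != 0 by rewrite pnatr_eq0 -lt0n.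
by field; apply/andP.
Qed.

Lemma sumw2 (n s u : nat) : n = (s + u)%N -> (0 < s)%N ->
  \sum_(j < u.+1) ('C(u, j))%:R * w n (1 + j) = 1 / s%:R.
Proof.
move=> hn hs; rewrite -(@sumw n s u hn hs) (reindex_inj rev_ord_inj) /=.
apply: eq_bigr => [[j /= lj]] _.
rewrite subSS bin_sub //; congr (_ * _); rewrite /w.
congr (_%:R / _); rewrite mulnC; congr (_ * _)%N; congr (_`!); lia.
Qed.

Theorem theorem5 (T : finType) (W : pred {set T}) :
  is_SVG W ->
  (forall (S : {set T}) (b : T),
      W S -> b \in S -> yes_blocker W b ->
      SS W b >= 1 / (#|S|)%:R) /\
  (forall (U : {set T}) (b : T),
      ~~ W U -> b \in ~: U -> no_blocker W b ->
      SS W b >= 1 / (#|~: U|)%:R).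
Proof.
move=> [mono [_ _]]; split.
- move=> S b WS bS yb.
  have s0 : (0 < #|S|)%N by apply/card_gt0P; exists b.
  rewrite -(@sumw #|T| #|S| #|~: S| (esym (cardsC S)) s0).
  rewrite -(@sum_subsets T (~: S) (fun k => w #|T| (#|S| + k))).
  rewrite -(@shift T S (~: S) (fun k => w #|T| k)); last by move=> x xS; rewrite inE xS.
  apply: SS_ge => X /andP[sSX _].
  have WX : W X by apply: mono WS.
  rewrite /yes_decisive (subsetP sSX) //= WX /=.
  by apply/negP => /yb; rewrite !inE eqxx.
- move=> U b nWU bU nb.
  have s0 : (0 < #|~: U|)%N by apply/card_gt0P; exists b.
  have hn : #|T| = (#|~: U| + #|U|)%N by rewrite addnC cardsC.
  rewrite -(@sumw2 _ _ _ hn s0) -(@sum_subsets T U (fun k => w #|T| (1 + k))).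
  under eq_bigr do rewrite -(cards1 b).
  rewrite -(@shift T [set b] U (fun k => w #|T| k)); last first.
    by move=> x; rewrite inE => /eqP ->; rewrite inE in bU.
  apply: SS_ge => X /andP[sbX sXU].
  have bX : b \in X by rewrite (subsetP sbX) // inE.
  rewrite /yes_decisive bX /=.
  have -> : W X by apply/negPn/negP => /nb; rewrite bX.
  apply: contra nWU => WXb; apply: mono WXb.
  apply/subsetP => x; rewrite !inE => /andP[xb xX].
  by move: (subsetP sXU x xX); rewrite !inE (negbTE xb).
Qed.
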